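(* Let $\mathbf p$ be a pinned configuration in $\mathbb R^d$ with $\ell$-dimensional affine span, and let $k\ge1$. If an analytic trajectory $\mathbf p(t)$ with $\mathbf p(0)=\mathbf p$ is in $\ell$-pinned position for all $t$ and is $k$-trivial, then it is $k$-vanishing.
   Context: A configuration $\mathbf q=(\mathbf q_1,\dots,\mathbf q_n)$, $\mathbf q_i\in\mathbb R^d$, is in $\ell$-pinned position if $\mathbf q_1=0$ and, for $2\le i\le\ell+1$, $\mathbf q_i\in\mathrm{span}(e_1,\dots,e_{i-1})$. A configuration $\mathbf p$ with $\ell$-dimensional affine span is pinned if $\mathbf p_1,\dots,\mathbf p_{\ell+1}$ are affinely independent and $\mathbf p$ is in $\ell$-pinned position. An analytic trajectory of isometries is a family $T(t)\mathbf x=A(t)\mathbf x+\mathbf b(t)$ with $A(t)$ orthogonal and $A,\mathbf b$ analytic in $t$. An analytic trajectory $\mathbf p(t)$ is $k$-trivial if it agrees through $k$-th order in $t$ (equal Taylor coefficients of orders $0,\dots,k$ at $t=0$) with $T(t)\mathbf p(0)$ for some analytic trajectory of isometries $T(t)$ with $T(0)=I$. A $C^k$ vector function $\varphi(t)$ is $k$-vanishing if $\varphi^{(i)}(0)=0$ for $1\le i\le k$. *)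

(* Defs.v *)
From Stdlib Require Import Reals.
From Coquelicot Require Import Coquelicot.
Open Scope R_scope.

(* Conventions.
   - A point of R^d is a function  nat -> R  of which only the coordinates
     j < d are meaningful (coordinate j corresponds to e_{j+1}).
   - A configuration of n points is  q : nat -> nat -> R  with  q v j  the
     j-th coordinate of point number v, for v < n.  Point v (0-based)
     is the paper's q_{v+1}.
   - A trajectory is  p : nat -> nat -> R -> R,  p v j t  being the j-th
     coordinate of point v at time t. *)

Fixpoint fsum (f : nat -> R) (m : nat) : R :=
  match m with
  | O => 0
  | S m' => fsum f m' + f m'
  end.

Definition kdelta (i j : nat) : R := if Nat.eqb i j then 1 else 0.

Definition analytic_on (eps : R) (f : R -> R) : Prop :=
  forall t0, Rabs t0 < eps ->
    exists r, 0 < r /\ exists a : nat -> R,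
      forall t, Rabs (t - t0) < r -> is_pseries a (t - t0) (f t).

Definition aff_indep (d : nat) (x : nat -> nat -> R) (m : nat) : Prop :=
  forall c : nat -> R,
    (forall j, (j < d)%nat ->
       fsum (fun v => c (S v) * (x (S v) j - x O j)) m = 0) ->
    forall v, (1 <= v <= m)%nat -> c v = 0.

Definition aff_span_dim (n d : nat) (q : nat -> nat -> R) (l : nat) : Prop :=
  (exists s : nat -> nat,
      (forall v, (v <= l)%nat -> (s v < n)%nat) /\
      aff_indep d (fun v => q (s v)) l) /\
  (forall s : nat -> nat,
      (forall v, (v <= S l)%nat -> (s v < n)%nat) ->
      ~ aff_indep d (fun v => q (s v)) (S l)).

(* l-pinned position: q_1 = 0 and q_i in span(e_1,...,e_{i-1}) for
   2 <= i <= l+1.  In 0-based indices: for v <= l, the coordinates j with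
   v <= j < d of point v vanish. *)
Definition pinned_position (d l : nat) (q : nat -> nat -> R) : Prop :=
  forall v j, (v <= l)%nat -> (v <= j)%nat -> (j < d)%nat -> q v j = 0.

Definition pinned (n d l : nat) (q : nat -> nat -> R) : Prop :=
  (l < n)%nat /\ aff_span_dim n d q l /\ aff_indep d q l /\
  pinned_position d l q.

Definition isometry_traj (d : nat) (eps : R)
    (A : nat -> nat -> R -> R) (b : nat -> R -> R) : Prop :=
  (forall i j, (i < d)%nat -> (j < d)%nat -> analytic_on eps (A i j)) /\
  (forall i, (i < d)%nat -> analytic_on eps (b i)) /\
  (forall t, Rabs t < eps -> forall i j, (i < d)%nat -> (j < d)%nat ->
      fsum (fun k => A k i t * A k j t) d = kdelta i j) /\
  (forall i j, (i < d)%nat -> (j < d)%nat -> A i j 0 = kdelta i j) /\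
  (forall i, (i < d)%nat -> b i 0 = 0).

Definition apply_iso (d : nat) (A : nat -> nat -> R -> R) (b : nat -> R -> R)
    (x : nat -> R) (j : nat) (t : R) : R :=
  fsum (fun k => A j k t * x k) d + b j t.

Definition analytic_traj (n d : nat) (eps : R) (p : nat -> nat -> R -> R) : Prop :=
  forall v j, (v < n)%nat -> (j < d)%nat -> analytic_on eps (p v j).

Definition k_trivial (n d k : nat) (p : nat -> nat -> R -> R) : Prop :=
  exists eps' A b, 0 < eps' /\ isometry_traj d eps' A b /\
    forall v j m, (v < n)%nat -> (j < d)%nat -> (m <= k)%nat ->
      Derive_n (p v j) m 0 =
      Derive_n (apply_iso d A b (fun i => p v i 0) j) m 0.

Definition k_vanishing (n d k : nat) (p : nat -> nat -> R -> R) : Prop :=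
  forall v j i, (v < n)%nat -> (j < d)%nat -> (1 <= i <= k)%nat ->
    Derive_n (p v j) i 0 = 0.

(* Main.v *)
Require Import Defs.
From Stdlib Require Import Reals Lra Lia Classical.
From Coquelicot Require Import Coquelicot.
Open Scope R_scope.

Lemma conv_radius (a : nat -> R) (x : R) :
  ex_pseries a x -> Rbar_le (Rabs x) (CV_radius a).
Proof.
  intro H. apply ex_pseries_R in H.
  apply ex_series_lim_0 in H.
  destruct (filterlim_bounded (fun n => a n * x ^ n)) as [M HM].
  { exists 0. exact H. }
  destruct (CV_radius_bounded a) as [Hub _].
  apply Hub. exists M. intro n. specialize (HM n).
  rewrite Rabs_mult, RPow_abs, Rabs_Rabsolu, <- Rabs_mult. exact HM.
Qed.

Definition germ (f : R -> R) (a : nat -> R) : Prop :=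
  exists del, 0 < del /\ forall t, Rabs t < del -> is_pseries a t (f t).

Lemma germ_rad f a del : 0 < del -> (forall t, Rabs t < del -> is_pseries a t (f t)) ->
  Rbar_le (del/2) (CV_radius a).
Proof.
  intros Hd H. replace (del/2) with (Rabs (del/2)).
  apply conv_radius. eexists. apply H. rewrite Rabs_pos_eq; lra.
  apply Rabs_pos_eq; lra.
Qed.

Lemma germ_coef f a m : germ f a -> Derive_n f m 0 = a m * INR (Factorial.fact m).
Proof.
  intros [del [Hd H]].
  pose proof (germ_rad f a del Hd H) as Hr.
  rewrite <- Derive_n_coef.
  apply Derive_n_ext_loc.
  exists (mkposreal _ Hd). intros t Ht. simpl in Ht.
  change (Rabs (t - 0) < del) in Ht. rewrite Rminus_0_r in Ht.
  symmetry. apply is_pseries_unique. apply H; auto.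
  eapply Rbar_lt_le_trans; [|exact Hr]. simpl. lra.
Qed.

Lemma germ_ext f g a b : germ f a -> (forall t, f t = g t) -> (forall n, a n = b n) -> germ g b.
Proof.
  intros [del [Hd H]] Hf Ha. exists del; split; auto. intros t Ht.
  rewrite <- Hf. eapply is_pseries_ext; [exact Ha|]. auto.
Qed.

Lemma germ_plus f g a b : germ f a -> germ g b ->
  germ (fun t => f t + g t) (fun n => a n + b n).
Proof.
  intros [d1 [H1 F1]] [d2 [H2 F2]]. exists (Rmin d1 d2). split.
  apply Rmin_pos; auto.
  intros t Ht. apply (is_pseries_plus a b t (f t) (g t)).
  apply F1. eapply Rlt_le_trans; [exact Ht| apply Rmin_l].
  apply F2. eapply Rlt_le_trans; [exact Ht| apply Rmin_r].
Qed.

Lemma germ_scal f a c : germ f a -> germ (fun t => f t * c) (fun n => a n * c).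
Proof.
  intros [d1 [H1 F1]]. exists d1. split; auto. intros t Ht.
  eapply is_pseries_ext.
  2:{ pose proof (is_pseries_scal c a t (f t)) as K.
      rewrite Rmult_comm. apply K. unfold mult; simpl. apply Rmult_comm. apply F1; auto. }
  intro n. unfold PS_scal, scal; simpl. unfold mult; simpl. apply Rmult_comm.
Qed.

Lemma germ_mult f g a b : germ f a -> germ g b ->
  germ (fun t => f t * g t) (PS_mult a b).
Proof.
  intros [d1 [H1 F1]] [d2 [H2 F2]].
  pose proof (germ_rad f a d1 H1 F1) as R1.
  pose proof (germ_rad g b d2 H2 F2) as R2.
  exists (Rmin d1 d2 / 2). split.
  pose proof (Rmin_pos _ _ H1 H2); lra.
  intros t Ht. apply is_pseries_mult.
  apply F1. pose proof (Rmin_l d1 d2). pose proof (Rmin_pos _ _ H1 H2). lra.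
  apply F2. pose proof (Rmin_r d1 d2). pose proof (Rmin_pos _ _ H1 H2). lra.
  eapply Rbar_lt_le_trans; [|exact R1]. simpl. pose proof (Rmin_l d1 d2). lra.
  eapply Rbar_lt_le_trans; [|exact R2]. simpl. pose proof (Rmin_r d1 d2). lra.
Qed.

Lemma germ_zero : germ (fun _ => 0) (fun _ => 0).
Proof.
  exists 1. split. lra. intros t _.
  unfold is_pseries, is_series.
  eapply filterlim_ext; [|apply filterlim_const].
  intro n. simpl. induction n. rewrite sum_O. unfold scal; simpl. unfold mult; simpl. ring.
  rewrite sum_Sn, <- IHn. unfold scal,plus; simpl. unfold mult; simpl. ring.
Qed.

Lemma germ_fsum (F : nat -> R -> R) (a : nat -> nat -> R) m :
  (forall k, (k < m)%nat -> germ (F k) (a k)) ->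
  germ (fun t => fsum (fun k => F k t) m) (fun n => fsum (fun k => a k n) m).
Proof.
  induction m; intro H. simpl. apply germ_zero.
  simpl. apply germ_plus. apply IHm. intros; apply H; lia. apply H; lia.
Qed.

Lemma analytic_germ eps f : 0 < eps -> analytic_on eps f -> germ f (fun m => Derive_n f m 0 / INR (Factorial.fact m)).
Proof.
  intros He Han. destruct (Han 0) as [r [Hr [a Ha]]]. rewrite Rabs_R0; auto.
  assert (G : germ f a).
  { exists r. split; auto. intros t Ht. pose proof (Ha t) as K. rewrite Rminus_0_r in K. auto. }
  eapply germ_ext; [exact G| reflexivity |].
  intro n. rewrite (germ_coef f a n G). field. apply INR_fact_neq_0.
Qed.

Lemma germ_TC f a : germ f a -> germ f (fun m => Derive_n f m 0 / INR (Factorial.fact m)).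
Proof.
  intro G. eapply germ_ext; [exact G| reflexivity |].
  intro n. rewrite (germ_coef f a n G). field. apply INR_fact_neq_0.
Qed.


Lemma fsum_ext f g m : (forall i, (i < m)%nat -> f i = g i) -> fsum f m = fsum g m.
Proof. induction m; intro H; simpl; auto. rewrite IHm, H; auto; intros; apply H; lia. Qed.

Lemma fsum_zero f m : (forall i, (i < m)%nat -> f i = 0) -> fsum f m = 0.
Proof. intro H. rewrite (fsum_ext f (fun _ => 0)); auto. induction m; simpl; auto. rewrite IHm. ring. intros; auto. Qed.

Lemma fsum_plus f g m : fsum (fun i => f i + g i) m = fsum f m + fsum g m.
Proof. induction m; simpl. ring. rewrite IHm; ring. Qed.

Lemma fsum_scal_l c f m : fsum (fun i => c * f i) m = c * fsum f m.
Proof. induction m; simpl. ring. rewrite IHm; ring. Qed.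

Lemma fsum_scal_r c f m : fsum (fun i => f i * c) m = fsum f m * c.
Proof. induction m; simpl. ring. rewrite IHm; ring. Qed.

Lemma fsum_swap (f : nat -> nat -> R) m1 m2 :
  fsum (fun i => fsum (fun j => f i j) m2) m1 = fsum (fun j => fsum (fun i => f i j) m1) m2.
Proof.
  induction m1; simpl. symmetry; apply fsum_zero; auto.
  rewrite IHm1, <- fsum_plus. reflexivity.
Qed.

Lemma fsum_first f m : fsum f (S m) = f O + fsum (fun i => f (S i)) m.
Proof. induction m; simpl. ring. simpl in IHm. rewrite IHm. ring. Qed.

Lemma fsum_single f m i0 : (i0 < m)%nat -> (forall i, (i < m)%nat -> i <> i0 -> f i = 0) -> fsum f m = f i0.
Proof.
  induction m; intros Hi H. lia. simpl.
  destruct (Nat.eq_dec i0 m). subst. rewrite fsum_zero. ring. intros; apply H; lia.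
  rewrite IHm; try lia. rewrite (H m); try lia. ring. intros; apply H; lia.
Qed.

Lemma fsum_delta k g m : (k < m)%nat -> fsum (fun i => kdelta k i * g i) m = g k.
Proof.
  intro Hk. rewrite (fsum_single _ m k Hk). unfold kdelta. rewrite Nat.eqb_refl. ring.
  intros i _ Hi. unfold kdelta. destruct (Nat.eqb_spec k i). lia. ring.
Qed.

Lemma fsum_sq_zero y m : fsum (fun j => y j * y j) m = 0 -> forall j, (j < m)%nat -> y j = 0.
Proof.
  induction m; intros H j Hj. lia. simpl in H.
  assert (0 <= fsum (fun j => y j * y j) m).
  { clear. induction m; simpl. lra. pose proof (Rle_0_sqr (y m)). unfold Rsqr in H. lra. }
  pose proof (Rle_0_sqr (y m)). unfold Rsqr in H1.
  destruct (Nat.eq_dec j m). subst. nra.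
  apply IHm; try lia. lra.
Qed.

Lemma sum_f_fsum g m : sum_f_R0 g m = fsum g (S m).
Proof. induction m; simpl. ring. rewrite IHm. reflexivity. Qed.

Lemma fsum_mult f g m1 m2 : fsum f m1 * fsum g m2 = fsum (fun i => fsum (fun j => f i * g j) m2) m1.
Proof.
  rewrite <- fsum_scal_r. apply fsum_ext; intros. rewrite <- fsum_scal_l. reflexivity.
Qed.


Lemma fsum_trunc f l m : (m <= l)%nat -> (forall i, (m <= i < l)%nat -> f i = 0) -> fsum f l = fsum f m.
Proof.
  induction l; intros Hm H. replace m with O by lia. reflexivity.
  destruct (Nat.eq_dec m (S l)). subst; reflexivity.
  simpl. rewrite H by lia. rewrite IHl; try lia. ring. intros; apply H; lia.
Qed.

Lemma span_lemma (d l : nat) (x : nat->nat->R) : aff_indep d x l -> pinned_position d l x ->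
  forall c, (c <= l)%nat -> forall y : nat -> R, (forall j, (c <= j)%nat -> (j < d)%nat -> y j = 0) ->
  exists g : nat -> R, forall j, (j < d)%nat -> y j = fsum (fun w => g w * x (S w) j) c.
Proof.
  intros Hind Hpin. induction c; intros Hc y Hy.
  - exists (fun _ => 0). intros j Hj. simpl. apply Hy; lia.
  - destruct (Compare_dec.le_lt_dec d c) as [Hdc|Hdc].
    + destruct (IHc ltac:(lia) y) as [g Hg]. intros; lia.
      exists (fun w => if Nat.eqb w c then 0 else g w). intros j Hj. simpl.
      rewrite Nat.eqb_refl. rewrite (fsum_ext _ (fun w => g w * x (S w) j)).
      rewrite <- Hg by auto. ring.
      intros i Hi. destruct (Nat.eqb_spec i c); [lia|]. reflexivity.
    + assert (Hnz : x (S c) c <> 0).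
      { intro Hz. destruct (IHc ltac:(lia) (x (S c))) as [g Hg].
        { intros j Hj Hjd. destruct (Nat.eq_dec j c). subst; auto. apply Hpin; lia. }
        set (cc := fun v => match v with O => 0 | S w => if Nat.ltb w c then g w else if Nat.eqb w c then -1 else 0 end).
        assert (K := Hind cc).
        assert (Hcc : cc (S c) = 0).
        { apply K; [|lia]. intros j Hj.
          rewrite (fsum_trunc _ l (S c)); try lia.
          simpl. rewrite Nat.ltb_irrefl, Nat.eqb_refl.
          rewrite (Hpin O j) by lia.
          rewrite (Hg j Hj). rewrite (fsum_ext _ (fun w => g w * x (S w) j)). ring.
          intros i Hi. destruct (Nat.ltb_spec i c); [|lia]. ring.
          intros i Hi. unfold cc. destruct (Nat.ltb_spec i c); [lia|]. destruct (Nat.eqb_spec i c); [lia|]. ring. }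
        unfold cc in Hcc. rewrite Nat.ltb_irrefl, Nat.eqb_refl in Hcc. lra. }
      set (r := y c / x (S c) c).
      destruct (IHc ltac:(lia) (fun j => y j - r * x (S c) j)) as [g Hg].
      { intros j Hj Hjd. destruct (Nat.eq_dec j c). subst. unfold r. field. auto.
        rewrite Hy by lia. rewrite (Hpin (S c) j) by lia. ring. }
      exists (fun w => if Nat.eqb w c then r else g w). intros j Hj. simpl.
      rewrite Nat.eqb_refl. rewrite (fsum_ext _ (fun w => g w * x (S w) j)).
      rewrite <- Hg by auto. ring.
      intros i Hi. destruct (Nat.eqb_spec i c); [lia|]. reflexivity.
Qed.

Lemma span_all (n d l : nat) (x : nat->nat->R) : (l < n)%nat -> aff_span_dim n d x l ->
  aff_indep d x l -> pinned_position d l x ->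
  forall v, (v < n)%nat -> exists g : nat -> R, forall j, (j < d)%nat ->
    x v j = fsum (fun w => g w * x (S w) j) l.
Proof.
  intros Hl [_ Hmax] Hind Hpin v Hv.
  set (s := fun w => if Nat.leb w l then w else v).
  assert (Hs : forall w, (w <= S l)%nat -> (s w < n)%nat).
  { intros w Hw. unfold s. destruct (Nat.leb_spec w l); lia. }
  specialize (Hmax s Hs). unfold aff_indep in Hmax.
  apply not_all_ex_not in Hmax. destruct Hmax as [cc Hcc].
  apply imply_to_and in Hcc. destruct Hcc as [Hsum Hnot].
  apply not_all_ex_not in Hnot. destruct Hnot as [v' Hv'].
  apply imply_to_and in Hv'. destruct Hv' as [Hv'1 Hv'2].
  assert (Hs0 : s O = O) by reflexivity.
  assert (HsS : forall w, (w < l)%nat -> s (S w) = S w).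
  { intros w Hw. unfold s. destruct (Nat.leb_spec (S w) l); lia. }
  assert (HsL : s (S l) = v).
  { unfold s. destruct (Nat.leb_spec (S l) l); lia. }
  assert (Hx0 : forall j, (j < d)%nat -> x O j = 0).
  { intros j Hj. apply Hpin; lia. }
  destruct (classic (cc (S l) = 0)) as [Hz|Hnz].
  - exfalso. apply Hv'2.
    destruct (Nat.eq_dec v' (S l)). rewrite e; auto.
    apply Hind; [|lia]. intros j Hj. specialize (Hsum j Hj). simpl in Hsum.
    rewrite Hz in Hsum. rewrite <- Hsum. rewrite Rmult_0_l, Rplus_0_r.
    apply fsum_ext. intros i Hi. rewrite HsS by auto. reflexivity.
  - exists (fun w => - cc (S w) / cc (S l)). intros j Hj.
    specialize (Hsum j Hj). simpl in Hsum. rewrite HsL in Hsum. change (s O) with O in Hsum. rewrite Hx0 in Hsum by auto.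
    rewrite (fsum_ext _ (fun w => cc (S w) * x (S w) j)) in Hsum.
    2:{ intros i Hi. rewrite HsS by auto. ring. }
    rewrite (fsum_ext _ (fun w => (- / cc (S l)) * (cc (S w) * x (S w) j))).
    2:{ intros i Hi. field. auto. }
    rewrite fsum_scal_l.
    replace (fsum (fun w => cc (S w) * x (S w) j) l) with (- (cc (S l) * (x v j - 0))) by lra.
    field. auto.
Qed.


Lemma fsum4 (T : nat->nat->nat->nat->R) a b c e :
  fsum (fun s => fsum (fun cc => fsum (fun i => fsum (fun j => T s cc i j) e) c) b) a =
  fsum (fun i => fsum (fun j => fsum (fun cc => fsum (fun s => T s cc i j) a) b) e) c.
Proof.
  rewrite (fsum_swap (fun s cc => fsum (fun i => fsum (fun j => T s cc i j) e) c)).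
  transitivity (fsum (fun cc => fsum (fun i => fsum (fun j => fsum (fun s => T s cc i j) a) e) c) b).
  { apply fsum_ext; intros cc _.
    rewrite (fsum_swap (fun s i => fsum (fun j => T s cc i j) e)).
    apply fsum_ext; intros i _.
    rewrite (fsum_swap (fun s j => T s cc i j)). reflexivity. }
  rewrite (fsum_swap (fun cc i => fsum (fun j => fsum (fun s => T s cc i j) a) e)).
  apply fsum_ext; intros i _.
  rewrite (fsum_swap (fun cc j => fsum (fun s => T s cc i j) a)). reflexivity.
Qed.

Definition NN (d : nat) (al : nat -> nat -> nat -> R) m (y : nat -> R) j :=
  fsum (fun c => al j c m * y c) d.
Definition ip (d : nat) (y z : nat -> R) := fsum (fun j => y j * z j) d.

Lemma core (n d l k : nat) (x : nat -> nat -> R) (al : nat -> nat -> nat -> R) (be : nat -> nat -> R) :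
  (l < n)%nat -> aff_span_dim n d x l -> aff_indep d x l -> pinned_position d l x ->
  (forall i j, (i<d)%nat -> (j<d)%nat -> al i j O = kdelta i j) ->
  (forall m i j, (1 <= m)%nat -> (i<d)%nat -> (j<d)%nat ->
     fsum (fun c => fsum (fun s => al c i s * al c j (m - s)%nat) (S m)) d = 0) ->
  (forall v j m, (v <= l)%nat -> (v <= j)%nat -> (j < d)%nat -> (1 <= m <= k)%nat ->
     fsum (fun c => al j c m * x v c) d + be j m = 0) ->
  forall v j m, (v < n)%nat -> (j < d)%nat -> (1 <= m <= k)%nat ->
     fsum (fun c => al j c m * x v c) d + be j m = 0.
Proof.
  intros Hl Hspan Hind Hpin Hal0 Horth Htraj.
  assert (Hx0 : forall c, (c < d)%nat -> x O c = 0) by (intros; apply Hpin; lia).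
  assert (Hbe : forall j m, (j < d)%nat -> (1 <= m <= k)%nat -> be j m = 0).
  { intros j m Hj Hm. pose proof (Htraj O j m ltac:(lia) ltac:(lia) Hj Hm) as K.
    rewrite fsum_zero in K. lra. intros; rewrite Hx0; auto; ring. }
  assert (HN0 : forall y c, (c < d)%nat -> NN d al O y c = y c).
  { intros y c Hc. unfold NN. rewrite (fsum_ext _ (fun i => kdelta c i * y i)).
    apply fsum_delta; auto. intros; rewrite Hal0; auto. }
  assert (Horth' : forall m y z, (1 <= m)%nat ->
     fsum (fun s => ip d (NN d al s y) (NN d al (m - s)%nat z)) (S m) = 0).
  { intros m y z Hm.
    transitivity (fsum (fun i => fsum (fun j => y i * z j *
       fsum (fun c => fsum (fun s => al c i s * al c j (m - s)%nat) (S m)) d) d) d).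
    2:{ apply fsum_zero; intros. apply fsum_zero; intros. rewrite Horth; auto. ring. }
    transitivity (fsum (fun s => fsum (fun c => fsum (fun i => fsum (fun j =>
       y i * z j * (al c i s * al c j (m - s)%nat)) d) d) d) (S m)).
    { apply fsum_ext; intros s _. unfold ip, NN. apply fsum_ext; intros c _.
      rewrite fsum_mult. apply fsum_ext; intros. apply fsum_ext; intros. ring. }
    rewrite fsum4. apply fsum_ext; intros. apply fsum_ext; intros.
    rewrite <- fsum_scal_l. apply fsum_ext; intros. rewrite <- fsum_scal_l. reflexivity. }
  assert (Hmain : forall m, (1 <= m <= k)%nat -> forall v, (v <= l)%nat -> forall j, (j < d)%nat ->
            NN d al m (x v) j = 0).
  { intro m. induction m as [m IHm] using Wf_nat.lt_wf_ind. intros Hm.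
    assert (Anti : forall v w, (v <= l)%nat -> (w <= l)%nat ->
       ip d (x v) (NN d al m (x w)) + ip d (NN d al m (x v)) (x w) = 0).
    { intros v w Hv Hw. pose proof (Horth' m (x v) (x w) ltac:(lia)) as K.
      destruct m as [|m']. lia.
      rewrite fsum_first in K. simpl in K.
      rewrite fsum_zero in K.
      2:{ intros i Hi. unfold ip. apply fsum_zero. intros c Hc.
          rewrite (IHm (S i)); try lia. ring. }
      rewrite Nat.sub_diag in K. replace (m' - m')%nat with O in K by lia.
      unfold ip in K |- *.
      rewrite (fsum_ext (fun j => NN d al 0 (x v) j * _) (fun j => x v j * NN d al (S m') (x w) j)) in K.
      2:{ intros; rewrite HN0; auto. }
      rewrite (fsum_ext (fun j => NN d al (S m') (x v) j * NN d al 0 (x w) j) (fun j => NN d al (S m') (x v) j * x w j)) in K.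
      2:{ intros; rewrite HN0; auto. }
      lra. }
    intro v. induction v as [v IHv] using Wf_nat.lt_wf_ind. intros Hv.
    destruct v as [|v'].
    { intros j Hj. unfold NN. apply fsum_zero. intros; rewrite Hx0; auto; ring. }
    set (y := NN d al m (x (S v'))).
    assert (Hy : forall j, (S v' <= j)%nat -> (j < d)%nat -> y j = 0).
    { intros j H1 H2. unfold y, NN. pose proof (Htraj (S v') j m Hv H1 H2 Hm).
      rewrite Hbe in H; auto. lra. }
    destruct (span_lemma d l x Hind Hpin (S v') Hv y Hy) as [g Hg].
    assert (Hw : forall w, (w < S v')%nat -> ip d (x (S w)) y = 0).
    { intros w Hw. destruct (Nat.eq_dec (S w) (S v')) as [E|E].
      - rewrite E. pose proof (Anti (S v') (S v') Hv Hv) as K.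
        unfold ip in K |- *. rewrite (fsum_ext (fun j => NN d al m (x (S v')) j * x (S v') j)
           (fun j => x (S v') j * NN d al m (x (S v')) j)) in K.
        fold y in K. lra. intros; ring.
      - pose proof (Anti (S w) (S v') ltac:(lia) Hv) as K.
        unfold ip in K |- *. rewrite fsum_zero with (m := d) (f := fun j => NN d al m (x (S w)) j * x (S v') j) in K.
        fold y in K. lra. intros. rewrite (IHv (S w)); try lia. ring. }
    assert (Hyy : ip d y y = 0).
    { unfold ip. rewrite (fsum_ext (fun j => y j * y j) (fun j => fsum (fun w => g w * (x (S w) j * y j)) (S v'))).
      rewrite fsum_swap. apply fsum_zero. intros w Hw'. rewrite fsum_scal_l.
      specialize (Hw w Hw'). unfold ip in Hw. rewrite Hw. ring.
      intros j Hj. rewrite (Hg j Hj) at 1. rewrite <- fsum_scal_r. apply fsum_ext. intros; ring. }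
    intros j Hj. apply (fsum_sq_zero y d Hyy j Hj). }
  intros v j m Hv Hj Hm. rewrite Hbe; auto.
  destruct (span_all n d l x Hl Hspan Hind Hpin v Hv) as [g Hg].
  rewrite (fsum_ext _ (fun c => fsum (fun w => g w * (al j c m * x (S w) c)) l)).
  rewrite fsum_swap. rewrite fsum_zero. ring.
  intros w Hw. rewrite fsum_scal_l. pose proof (Hmain m Hm (S w) ltac:(lia) j Hj) as K.
  unfold NN in K. rewrite K. ring.
  intros c Hc. rewrite (Hg c Hc). rewrite <- fsum_scal_l. apply fsum_ext; intros; ring.
Qed.


Lemma loc0 (f g : R -> R) e : 0 < e -> (forall t, Rabs t < e -> f t = g t) ->
  locally 0 (fun t => f t = g t).
Proof.
  intros He H. exists (mkposreal _ He). intros t Ht.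
  change (Rabs (t - 0) < e) in Ht. rewrite Rminus_0_r in Ht. auto.
Qed.

Lemma Derive_n_loc_const f c e m : 0 < e -> (forall t, Rabs t < e -> f t = c) ->
  (1 <= m)%nat -> Derive_n f m 0 = 0.
Proof.
  intros He H Hm. rewrite (Derive_n_ext_loc f (fun _ => c)).
  destruct m. lia. apply Derive_n_const.
  apply (loc0 f (fun _ => c) e); auto.
Qed.

Lemma coef_zero a m : a * INR (Factorial.fact m) = 0 -> a = 0.
Proof. intro H. pose proof (INR_fact_neq_0 m). apply Rmult_integral in H. tauto. Qed.

Theorem lemmaA9 (n d l k : nat) (q : nat -> nat -> R)
    (eps : R) (p : nat -> nat -> R -> R) :
  pinned n d l q ->
  (1 <= k)%nat ->
  0 < eps ->
  analytic_traj n d eps p ->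
  (forall v j, (v < n)%nat -> (j < d)%nat -> p v j 0 = q v j) ->
  (forall t, Rabs t < eps -> pinned_position d l (fun v j => p v j t)) ->
  k_trivial n d k p ->
  k_vanishing n d k p.
Proof.
  intros Hpinned Hk He Han Hp0 Hpos Htriv.
  destruct Hpinned as [Hl [Hspan [Hind Hpinq]]].
  destruct Htriv as [eps' [A [b [He' [[HA [Hb [Horth [HA0 Hb0]]]] Hder]]]]].
  set (al := fun i j m => Derive_n (A i j) m 0 / INR (Factorial.fact m)).
  set (be := fun j m => Derive_n (b j) m 0 / INR (Factorial.fact m)).
  assert (GA : forall i j, (i < d)%nat -> (j < d)%nat -> germ (A i j) (al i j)).
  { intros. apply (analytic_germ eps'); auto. }
  assert (Gb : forall j, (j < d)%nat -> germ (b j) (be j)).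
  { intros. apply (analytic_germ eps'); auto. }
  assert (Giso : forall (y : nat -> R) j, (j < d)%nat ->
    germ (apply_iso d A b y j) (fun m => fsum (fun c => al j c m * y c) d + be j m)).
  { intros y j Hj.
    assert (G1 : germ (fun t => fsum (fun c => A j c t * y c) d) (fun m => fsum (fun c => al j c m * y c) d)).
    { apply (germ_fsum (fun c t => A j c t * y c) (fun c m => al j c m * y c)).
      intros c Hc. apply (germ_scal (A j c) (al j c) (y c)). apply GA; auto. }
    exact (germ_plus _ _ _ _ G1 (Gb j Hj)). }
  assert (Hiso : forall v j m, (v < n)%nat -> (j < d)%nat -> (m <= k)%nat ->
    Derive_n (p v j) m 0 =
    (fsum (fun c => al j c m * q v c) d + be j m) * INR (Factorial.fact m)).
  { intros v j m Hv Hj Hm. rewrite Hder by auto.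
    rewrite (germ_coef _ _ m (Giso _ j Hj)). f_equal. f_equal.
    apply fsum_ext. intros c Hc. rewrite Hp0; auto. }
  intros v j i Hv Hj Hi. rewrite Hiso by (auto; lia).
  rewrite (core n d l k q al be Hl Hspan Hind Hpinq); auto; try lia.
  - ring.
  - intros i0 j0 Hi0 Hj0. unfold al. simpl. rewrite HA0 by auto. field.
  - intros m i0 j0 Hm Hi0 Hj0.
    assert (G : germ (fun t => fsum (fun c => A c i0 t * A c j0 t) d)
                     (fun m => fsum (fun c => PS_mult (al c i0) (al c j0) m) d)).
    { apply (germ_fsum (fun c t => A c i0 t * A c j0 t)). intros c Hc.
      apply germ_mult; apply GA; auto. }
    pose proof (germ_coef _ _ m G) as K.
    rewrite (Derive_n_loc_const _ (kdelta i0 j0) eps') in K; auto.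
    symmetry in K. apply coef_zero in K. rewrite <- K.
    apply fsum_ext. intros c _. unfold PS_mult. symmetry. apply sum_f_fsum.
  - intros v0 j0 m Hv0 Hvj Hj0 Hm.
    pose proof (Hiso v0 j0 m ltac:(lia) Hj0 ltac:(lia)) as K.
    rewrite (Derive_n_loc_const _ 0 eps) in K; auto; try lia.
    symmetry in K. apply coef_zero in K. exact K.
    intros t Ht. apply (Hpos t Ht); auto.
Qed.
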